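(* Let $G$ be a plane graph with maximum degree $\Delta\ge 2$. Then $\pi_{fl}(G)\le \lceil \Delta + 4\sqrt{\Delta}+3\rceil$.
   Context: A plane graph is a planar graph with a fixed embedding in the plane. A facial path is a path whose vertices are consecutive vertices on the boundary walk of some face. A $2j$-repetition is a path $v_1\dots v_{2j}$ with $c(v_i)=c(v_{i+j})$ for $1\le i\le j$. A vertex-coloring is facially non-repetitive if no facial path is a repetition. $\pi_{fl}(G)$, the facial Thue choice number, is the minimum $k$ such that for every assignment of lists of size at least $k$ to the vertices, $G$ has a facially non-repetitive coloring with each vertex colored from its list. *)

(* Defs.v *)
From mathcomp Require Import all_boot.
Set Implicit Arguments. Unset Strict Implicit. Unset Printing Implicit Defensive.

Section PlaneGraphs.
Variable V : finType.
Variable adj : rel V.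

Definition simple_graph := symmetric adj /\ irreflexive adj.

Definition nbhd (u : V) : {set V} := [set w | adj u w].
Definition deg (u : V) : nat := #|nbhd u|.
Definition max_deg : nat := \max_(u : V) deg u.

(* A rotation system: rot u is a cyclic permutation of the neighbours of u
   (rot u v = the neighbour following v in the clockwise order around u). *)
Definition rotation_system (rot : V -> V -> V) : Prop :=
  forall u,
    [/\ {in nbhd u, forall v, rot u v \in nbhd u},
        {in nbhd u &, injective (rot u)} &
        {in nbhd u &, forall v w, exists n, iter n (rot u) v = w}].

(* darts (oriented edges) and the face-tracing permutation
   phi = sigma o alpha : after traversing the dart (u,v), leave v along the
   dart (v, rot v u). Orbits of phi on darts = face boundary walks. *)
Definition dart (d : V * V) : bool := adj d.1 d.2.
Definition face_step (rot : V -> V -> V) (d : V * V) : V * V :=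
  (d.2, rot d.2 d.1).

Definition num_faces (rot : V -> V -> V) : nat := fcard (face_step rot) dart.
Definition num_darts : nat := #|[pred d : V * V | dart d]|.   (* = 2 |E| *)
Definition num_components : nat := n_comp adj (predT : pred V).
Definition num_isolated : nat := #|[pred u : V | deg u == 0]|.

(* Genus 0: Euler's formula V - E + F = 2 on every component (an isolated
   vertex is counted as a component with one face). Since each component
   of an embedding given by a rotation system has V-E+F <= 2, this is
   equivalent to every component being embedded in the sphere. *)
Definition planar_rotation (rot : V -> V -> V) : Prop :=
  rotation_system rot /\
  2 * #|V| + 2 * num_faces rot + 2 * num_isolated
    = 4 * num_components + num_darts.

Definition facial_path (rot : V -> V -> V) (s : seq V) : Prop :=
  exists (d : V * V) (n : nat),
    [/\ dart d,
        s = [seq (iter i (face_step rot) d).1 | i <- iota 0 n] & uniq s].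

Definition repetition (c : V -> nat) (s : seq V) : Prop :=
  exists j, [/\ 0 < j, size s = j + j &
    forall i, i < j -> nth 0 (map c s) i = nth 0 (map c s) (i + j)].

Definition facially_nonrepetitive (rot : V -> V -> V) (c : V -> nat) : Prop :=
  forall s, facial_path rot s -> ~ repetition c s.

(* pi_fl(G) <= k : every assignment of lists of at least k (distinct) colors
   admits a facially non-repetitive coloring from the lists. *)
Definition facial_thue_choosable (rot : V -> V -> V) (k : nat) : Prop :=
  forall L : V -> seq nat, (forall v, k <= size (undup (L v))) ->
    exists c : V -> nat,
      (forall v, c v \in L v) /\ facially_nonrepetitive rot c.

End PlaneGraphs.

(* Main.v *)
Require Import Defs.
From mathcomp Require Import all_boot.
From Stdlib Require Import Reals.
From mathcomp Require Import zify.
From Stdlib Require Import Lra.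
From Stdlib Require ClassicalDescription.
Set Implicit Arguments. Unset Strict Implicit. Unset Printing Implicit Defensive.

Definition pb (P : Prop) : bool := if ClassicalDescription.excluded_middle_informative P then true else false.
Lemma pbP P : reflect P (pb P).
Proof. rewrite /pb; case: ClassicalDescription.excluded_middle_informative => h; by constructor. Qed.

Lemma card_bigcup_le (T : finType) (I : eqType) (r : seq I) (F : I -> {set T}) :
  #|\bigcup_(i <- r) F i| <= \sum_(i <- r) #|F i|.
Proof.
elim: r => [|i r IH]; first by rewrite !big_nil cards0.
rewrite !big_cons. apply: leq_trans (leq_card_setU _ _) _. by rewrite leq_add2l.
Qed.

Lemma inj_card (T T' : finType) (f : T -> T') (A : {pred T}) (B : {pred T'}) :
  {in A &, injective f} -> {in A, forall x, f x \in B} -> #|A| <= #|B|.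
Proof.
move=> inj sub; rewrite -(card_in_imset inj); apply: subset_leq_card.
apply/subsetP => y /imsetP [x xA ->]; exact: sub.
Qed.

Definition sumR (I : Type) (r : seq I) (G : I -> R) : R := foldr (fun i acc => G i + acc)%R 0%R r.

Lemma INR_sum_le (I : Type) (r : seq I) (F : I -> nat) (G : I -> R) :
  (forall i, (INR (F i) <= G i)%R) -> (INR (\sum_(i <- r) F i) <= sumR r G)%R.
Proof.
move=> h; elim: r => [|i r IH]; first by rewrite big_nil /=; lra.
rewrite big_cons plus_INR /=; have := h i; lra.
Qed.

Lemma INR_sum_le_in (I : eqType) (r : seq I) (F : I -> nat) (G : I -> R) :
  (forall i, i \in r -> (INR (F i) <= G i)%R) -> (INR (\sum_(i <- r) F i) <= sumR r G)%R.
Proof.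
elim: r => [|i r IH] h; first by rewrite big_nil /=; lra.
rewrite big_cons plus_INR /=; have := h i (mem_head _ _).
have := IH (fun k hk => h k (mem_behead (s := i :: r) hk)); lra.
Qed.

Lemma sumR_le (I : Type) (r : seq I) (G1 G2 : I -> R) :
  (forall i, (G1 i <= G2 i)%R) -> (sumR r G1 <= sumR r G2)%R.
Proof. move=> h; elim: r => [|i r IH] /=; first lra. have := h i; lra. Qed.

Lemma sumR_scal (I : Type) (r : seq I) (G : I -> R) c :
  sumR r (fun i => c * G i)%R = (c * sumR r G)%R.
Proof. elim: r => [|i r IH] /=; first ring. rewrite IH; ring. Qed.

Lemma sumR_ind (I : Type) (r : seq I) (P : pred I) c :
  sumR r (fun i => if P i then c else 0%R) = (INR (\sum_(i <- r) (P i : nat)) * c)%R.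
Proof.
elim: r => [|i r IH] /=; first by rewrite big_nil /=; ring.
rewrite big_cons plus_INR IH; case: (P i) => /=; ring.
Qed.

Lemma geom (x : R) b N : (0 <= x)%R -> (x < 1)%R ->
  (sumR (iota b.+1 N) (fun j => INR j * x ^ j.-1) <=
   (INR b.+1 * x ^ b - INR b * x ^ b.+1) / ((1 - x) ^ 2))%R.
Proof.
move=> h0 h1; elim: N b => [|N IH] b.
  have -> : sumR (iota b.+1 0) (fun j => INR j * x ^ j.-1)%R = 0%R by [].
  have hy := pow_le x b h0.
  have hb := pos_INR b.
  have e : (x ^ b.+1 = x * x ^ b)%R by [].
  apply: Rmult_le_pos; last by apply/Rlt_le/Rinv_0_lt_compat; nra.
  have hb2 : (0 <= INR b * (1 - x) + 1)%R by nra.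
  have := Rmult_le_pos _ _ hy hb2. rewrite e S_INR; nra.
have -> : sumR (iota b.+1 N.+1) (fun j => INR j * x ^ j.-1)%R =
  (INR b.+1 * x ^ b + sumR (iota b.+2 N) (fun j => INR j * x ^ j.-1))%R by [].
apply: Rle_trans (Rplus_le_compat_l _ _ _ (IH b.+1)) _.
have e1 : (x ^ b.+1 = x * x ^ b)%R by [].
have e2 : (x ^ b.+2 = x * (x * x ^ b))%R by [].
have e3 : INR b.+2 = (INR b + 1 + 1)%R by rewrite !S_INR.
have e4 : INR b.+1 = (INR b + 1)%R by rewrite !S_INR.
apply: Req_le; rewrite e1 e2 e3 e4; field; lra.
Qed.

Section Main.
Variable V : finType.
Variable adj : rel V.
Variable rot : V -> V -> V.
Hypothesis Hsym : symmetric adj.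
Hypothesis Hirr : irreflexive adj.
Hypothesis Hrot : rotation_system adj rot.

Notation fs := (face_step rot).
Notation dartb := (dart adj).

Lemma fs_dart d : dartb d -> dartb (fs d).
Proof.
case: d => a b; rewrite /dart /face_step /= => hab.
have : a \in nbhd adj b by rewrite inE Hsym.
by case: (Hrot b) => h _ _ /h; rewrite inE.
Qed.

Lemma iter_dart p d : dartb d -> dartb (iter p fs d).
Proof. by move=> h; elim: p => //= p IH; apply: fs_dart. Qed.

Lemma fs_inj : {in dartb &, injective fs}.
Proof.
case=> a1 b1 [a2 b2]; rewrite /dart /face_step /= => h1 h2 [eb er].
subst b2. case: (Hrot b1) => _ hi _. congr (_, _). apply: hi => //; by rewrite inE Hsym.
Qed.

Lemma iter_inj p : {in dartb &, injective (iter p fs)}.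
Proof.
elim: p => // p IH d1 d2 h1 h2 /= e.
apply: IH => //; apply: fs_inj => //; exact: iter_dart.
Qed.

Lemma deg_le v : deg adj v <= max_deg adj.
Proof. exact: (leq_bigmax v). Qed.

Lemma count_pos p v : #|[set d | dartb d & (iter p fs d).1 == v]| <= max_deg adj.
Proof.
apply: leq_trans (deg_le v).
apply: (@inj_card _ _ (fun d => (iter p fs d).2)).
  move=> d1 d2; rewrite !inE => /andP [h1 e1] /andP [h2 e2] e.
  apply: (@iter_inj p) => //. move: e1 e2 e; case: (iter p fs d1) => a b; case: (iter p fs d2) => a' b' /=.
  by move=> /eqP e1 /eqP e2 e; rewrite e1 e2 e.
move=> d; rewrite !inE => /andP [h /eqP e]. have := iter_dart p h.
by rewrite /dart e.
Qed.


Definition walk (d : V * V) (m : nat) : seq V := [seq (iter i fs d).1 | i <- iota 0 m].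

Definition rep_j (c : V -> nat) (s : seq V) j :=
  forall i, i < j -> nth 0 (map c s) i = nth 0 (map c s) (i + j).

Lemma rep_ext (c1 c2 : V -> nat) (s : seq V) : {in s, c1 =1 c2} -> repetition c1 s -> repetition c2 s.
Proof.
move=> e [j [h1 h2 h3]]; exists j; split => //.
have -> : map c2 s = map c1 s by apply/eq_in_map => x xs; rewrite e.
exact: h3. Qed.

Lemma partner_take (s : seq V) j u : size s = j + j -> u \in take j s ->
  exists2 w, w \in drop j s & forall c : V -> nat, rep_j c s j -> c u = c w.
Proof.
move=> hs hu.
have hsz : size (take j s) = j by rewrite size_takel // hs leq_addr.
set i := index u (take j s).
have hi : i < j by rewrite -hsz index_mem.
have eu : nth u s i = u by rewrite -(nth_take _ hi) nth_index.
exists (nth u s (i + j)).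
  rewrite -[i + j]addnC -nth_drop; apply: mem_nth; rewrite size_drop hs addnK //.
move=> c /(_ i hi).
have s1 : i < size s by rewrite hs; lia.
have s2 : i + j < size s by rewrite hs; lia.
by rewrite !(nth_map u) // eu.
Qed.

Lemma partner_drop (s : seq V) j u : size s = j + j -> u \in drop j s ->
  exists2 w, w \in take j s & forall c : V -> nat, rep_j c s j -> c u = c w.
Proof.
move=> hs hu.
have hsz : size (drop j s) = j by rewrite size_drop hs addnK.
set i := index u (drop j s).
have hi : i < j by rewrite -hsz index_mem.
have eu : nth u s (i + j) = u by rewrite addnC -nth_drop nth_index.
exists (nth u s i).
  rewrite -(nth_take _ hi); apply: mem_nth; rewrite size_takel // hs leq_addr //.
move=> c /(_ i hi).
have s1 : i < size s by rewrite hs; lia.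
have s2 : i + j < size s by rewrite hs; lia.
by rewrite !(nth_map u) // eu.
Qed.

Lemma take_drop_disj (s : seq V) j w : uniq s -> w \in drop j s -> w \notin take j s.
Proof.
move=> u hw; move: u; rewrite -{1}(cat_take_drop j s) cat_uniq => /and3P [_ /hasPn h _].
exact: h.
Qed.


Lemma in_bigcup_seq (T : finType) (I : eqType) (r : seq I) (F : I -> {set T}) i a :
  i \in r -> a \in F i -> a \in \bigcup_(i <- r) F i.
Proof.
elim: r => // i0 r IH; rewrite inE big_cons inE => /orP [/eqP <- -> //| hi ha].
by rewrite IH ?orbT.
Qed.

Variable n : nat.
Variable L : V -> seq nat.
Hypothesis HL : forall v, n.+1 <= size (undup (L v)).

Definition lst v := take n.+1 (undup (L v)).
Lemma lst_size v : size (lst v) = n.+1.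
Proof. exact: size_takel. Qed.
Definition col v (i : 'I_n.+1) := nth 0 (lst v) i.
Lemma col_inj v : injective (col v).
Proof.
move=> i1 i2 /eqP; rewrite /col nth_uniq ?lst_size // ?take_uniq ?undup_uniq //.
by move/eqP/val_inj.
Qed.
Lemma col_in v i : col v i \in L v.
Proof.
rewrite -mem_undup; apply: (@mem_take n.+1); apply: mem_nth; by rewrite lst_size.
Qed.

Definition colf (f : {ffun V -> 'I_n.+1}) v := col v (f v).
Definition good (S : {set V}) (f : {ffun V -> 'I_n.+1}) : Prop :=
  (forall u, u \notin S -> f u = ord0) /\
  (forall s, facial_path adj rot s -> {subset s <= S} -> ~ repetition (colf f) s).
Definition CS S := [set f : {ffun V -> 'I_n.+1} | pb (good S f)].
Definition C S := #|CS S|.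

Lemma C0 : C set0 = 1.
Proof.
rewrite /C (_ : CS set0 = [set [ffun => ord0]]) ?cards1 //.
apply/setP => f; rewrite !inE; apply/pbP/eqP.
  by case=> h _; apply/ffunP => u; rewrite ffunE h ?in_set0.
move=> ->; split; first by move=> u _; rewrite ffunE.
move=> s _ hs [j [hj hsz _]]. case: s hs hsz => [|a s] hs /=.
  by move=> e; move: hj; rewrite (_ : j = 0) //; lia.
by move=> _; have := hs a; rewrite inE eqxx in_set0 => /(_ isT).
Qed.


Section Step.
Variable S : {set V}.
Variable v : V.
Hypothesis hv : v \notin S.

Definition ext (g : {ffun V -> 'I_n.+1}) (y : 'I_n.+1) := [ffun u => if u == v then y else g u].
Definition PP := setX (CS S) [set: 'I_n.+1].
Definition EE := [set p : {ffun V -> 'I_n.+1} * 'I_n.+1 | ext p.1 p.2 \in CS (v |: S)].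

Lemma inA_v g : g \in CS S -> g v = ord0.
Proof. by rewrite inE => /pbP [h _]; apply: h. Qed.

Lemma good_pairs : #|PP :&: EE| <= C (v |: S).
Proof.
apply: (@inj_card _ _ (fun p => ext p.1 p.2)); last by move=> p; rewrite !inE => /andP [_].
move=> [g1 y1] [g2 y2]; rewrite !inE /= => /andP [/andP [h1 _] _] /andP [/andP [h2 _] _] e.
have ey : y1 = y2 by have := congr1 (fun f : {ffun V -> 'I_n.+1} => f v) e; rewrite /= !ffunE eqxx.
congr (_, _) => //; apply/ffunP => u.
have := congr1 (fun f : {ffun V -> 'I_n.+1} => f u) e; rewrite /= !ffunE.
case: eqP => [-> _|//]. by rewrite !inA_v // inE.
Qed.


Definition Xg (g : {ffun V -> 'I_n.+1}) := [set y : 'I_n.+1 | [exists w, adj v w && (col v y == col w (g w))]].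
Definition X1 := [set p in PP | p.2 \in Xg p.1].

Lemma Xg_card g : #|Xg g| <= max_deg adj.
Proof.
apply: leq_trans (deg_le v).
pose pk y := [pick w | adj v w && (col v y == col w (g w))].
apply: (@inj_card _ _ (fun y => odflt v (pk y))).
  move=> y1 y2; rewrite !inE /pk => /existsP [w1 h1] /existsP [w2 h2].
  case: pickP => [a1 /andP [_ /eqP e1]|]; last by move/(_ w1); rewrite h1.
  case: pickP => [a2 /andP [_ /eqP e2]|]; last by move/(_ w2); rewrite h2.
  by move=> /= ea; apply: (@col_inj v); rewrite e1 e2 ea.
move=> y; rewrite !inE /pk => /existsP [w1 h1].
case: pickP => [a1 /andP [h _]|]; last by move/(_ w1); rewrite h1.
by [].
Qed.

Lemma sum_const_le (I : Type) (r : seq I) (F : I -> nat) m :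
  (forall i, F i <= m) -> \sum_(i <- r) F i <= size r * m.
Proof.
move=> h; elim: r => [|i r IH]; first by rewrite big_nil.
by rewrite big_cons /= mulSn leq_add.
Qed.

Lemma X1_card : #|X1| <= #|CS S| * max_deg adj.
Proof.
have sub : X1 \subset \bigcup_(g <- enum (CS S)) [set (g, y) | y in Xg g].
  apply/subsetP => [[g y]]; rewrite !inE /= => /andP [/andP [hg _] hy].
  apply: (@in_bigcup_seq _ _ _ _ g); first by rewrite mem_enum inE.
  by apply/imsetP; exists y; rewrite ?inE.
apply: leq_trans (subset_leq_card sub) _.
apply: leq_trans (card_bigcup_le _ _) _.
rewrite cardE; apply: sum_const_le => g.
by apply: leq_trans (leq_imset_card _ _) (Xg_card g).
Qed.


Definition sw d j := walk d (j + j).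
Definition pathok j d := [&& dartb d, uniq (sw d j), all (mem (v |: S)) (sw d j) & v \in sw d j].
Definition XX j d := [set p in PP | pathok j d && pb (rep_j (colf (ext p.1 p.2)) (sw d j) j)].

Lemma size_walk d m : size (walk d m) = m.
Proof. by rewrite size_map size_iota. Qed.

Lemma cover : PP :\: EE \subset
  X1 :|: \bigcup_(j <- iota 2 #|V|) \bigcup_(d <- enum [set: V * V]) XX j d.
Proof.
apply/subsetP => [[g y]]; rewrite inE => /andP [notE inP].
case: (boolP ((g, y) \in _)) => // hn; exfalso; move/negP: notE; apply.
have hg : good S g by move: inP; rewrite inE /= inE => /andP [/pbP].
have hext : forall u, u != v -> ext g y u = g u by move=> u /negbTE hu; rewrite ffunE hu.
rewrite inE /= inE; apply/pbP; split.
  move=> u; rewrite !inE negb_or => /andP [hu hS]; rewrite hext //; exact: (proj1 hg).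
move=> s [d [m [hd es us]]] hs [j [hj hsz hrep]].
have hm : m = j + j by rewrite -hsz es size_walk.
case vs: (v \in s); last first.
  apply: (hg.2 s) => //; first by exists d, m.
    move=> u us'; have := hs u us'; rewrite !inE => /orP [/eqP ev|//].
    by move: vs; rewrite -ev us'.
  apply: rep_ext (_ : repetition (colf (ext g y)) s); last by exists j.
  move=> u us'; rewrite /colf hext //; apply/negP => /eqP ev; by move: vs; rewrite -ev us'.
have [j1|j2] : j = 1 \/ 2 <= j by lia.
- subst j; move/negP: hn; apply; rewrite inE; apply/orP; left.
  rewrite inE inP /= inE.
  have e2 : s = [:: d.1; d.2] by rewrite es hm.
  have hc := hrep 0 isT; rewrite e2 /= in hc.
  have dne : d.2 != d.1 by apply/negP => /eqP e; move: hd; rewrite /dart e Hirr.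
  move: vs; rewrite e2 !inE => /orP [/eqP ev|/eqP ev].
    have hd' : adj d.1 d.2 := hd.
    apply/existsP; exists d.2; rewrite ev hd' /=.
    have n2 : d.2 != v by rewrite ev.
    move: hc; rewrite /colf !ffunE -ev eqxx (negbTE n2) => ->; by [].
  have hd' : adj d.1 d.2 := hd.
  apply/existsP; exists d.1; rewrite ev Hsym hd' /=.
  have n1 : d.1 != v by rewrite ev eq_sym.
  move: hc; rewrite /colf !ffunE -ev eqxx (negbTE n1) => <-; by [].
- move/negP: hn; apply; rewrite inE; apply/orP; right.
  have hjV : j + j <= #|V| by rewrite -hsz -(card_uniqP us) max_card.
  apply: (@in_bigcup_seq _ _ _ _ j); first by rewrite mem_iota; lia.
  apply: (@in_bigcup_seq _ _ _ _ d); first by rewrite mem_enum inE.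
  have esw : sw d j = s by rewrite es hm.
  rewrite inE inP /= /pathok esw hd us vs /= andbT; apply/andP; split; first by apply/allP => u /hs.
  by apply/pbP.
Qed.


Lemma ext_inj p1 p2 : p1 \in PP -> p2 \in PP -> ext p1.1 p1.2 = ext p2.1 p2.2 -> p1 = p2.
Proof.
case: p1 p2 => [g1 y1] [g2 y2]; rewrite !inE /= => /andP [h1 _] /andP [h2 _] e.
have ey : y1 = y2 by have := congr1 (fun f : {ffun V -> 'I_n.+1} => f v) e; rewrite /= !ffunE eqxx.
congr (_, _) => //; apply/ffunP => u.
have := congr1 (fun f : {ffun V -> 'I_n.+1} => f u) e; rewrite /= !ffunE.
case: eqP => [-> _|//]. by rewrite !inA_v // inE.
Qed.

Lemma XX_card j d : 0 < j -> pathok j d ->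
  exists T : {set V}, [/\ T \subset S, j.-1 <= #|T| & #|XX j d| <= C (S :\: T)].
Proof.
move=> hj; rewrite /pathok => /and4P [hd us hall vs].
set s := sw d j in us hall vs *.
have hsz : size s = j + j by rewrite size_walk.
set H := if v \in take j s then take j s else drop j s.
have vH : v \in H.
  rewrite /H; case: ifP => // /negbT hn.
  by move: vs; rewrite -{1}(cat_take_drop j s) mem_cat (negbTE hn).
have Hs : {subset H <= s} by rewrite /H; case: ifP => _ u; [apply: mem_take | apply: mem_drop].
have Huniq : uniq H by rewrite /H; case: ifP => _; [apply: take_uniq | apply: drop_uniq].
have Hsize : size H = j.
  by rewrite /H; case: ifP => _; [rewrite size_takel // hsz leq_addr | rewrite size_drop hsz addnK].
have partner : forall u, u \in H -> exists2 w, (w \in s) && (w \notin H) & forall c, rep_j c s j -> c u = c w.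
  move=> u; rewrite /H; case: ifP => _ hu.
    have [w hw hc] := partner_take hsz hu; exists w => //.
    by rewrite (mem_drop hw) take_drop_disj.
  have [w hw hc] := partner_drop hsz hu; exists w => //.
  rewrite (mem_take hw) /=; apply/negP => hw'.
  by move: hw; rewrite (negbTE (take_drop_disj us hw')).
have hall' : {subset s <= v |: S} by move=> u us'; move/allP: hall => /(_ u us').
exists (S :&: [set u in H]); split.
- exact: subsetIl.
- have sub : [set u in H] \subset v |: (S :&: [set u in H]).
    apply/subsetP => u; rewrite inE => uH; rewrite !inE uH andbT.
    by have := hall' u (Hs u uH); rewrite !inE.
  have := subset_leq_card sub; rewrite cardsU1 cardsE (card_uniqP Huniq) Hsize.
  case: (v \notin _); rewrite /=; lia.
pose r (p : {ffun V -> 'I_n.+1} * 'I_n.+1) : {ffun V -> 'I_n.+1} :=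
  [ffun u => if u \in H then ord0 else ext p.1 p.2 u].
apply: (@inj_card _ _ r).
  move=> p1 p2 hp1 hp2 e.
  have P1 : p1 \in PP by move: hp1; rewrite inE => /andP [].
  have P2 : p2 \in PP by move: hp2; rewrite inE => /andP [].
  move: hp1 hp2; rewrite !inE => /andP [_ /andP [_ /pbP R1]] /andP [_ /andP [_ /pbP R2]].
  apply: ext_inj => //; apply/ffunP => u.
  case: (boolP (u \in H)) => uH; last first.
    by have := congr1 (fun f : {ffun V -> 'I_n.+1} => f u) e; rewrite /r !ffunE (negbTE uH).
  have [w /andP [ws wH] hc] := partner u uH.
  have e1 := hc _ R1; have e2 := hc _ R2.
  have ew := congr1 (fun f : {ffun V -> 'I_n.+1} => f w) e; rewrite /r /= !ffunE (negbTE wH) in ew.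
  apply: (@col_inj u); move: e1 e2; rewrite /colf => -> ->; by rewrite !ffunE ew.
move=> [g y]; rewrite !inE /= => /andP [/andP [hg _] /andP [_ /pbP R]].
move/pbP: hg => hg.
apply/pbP; split.
  move=> u; rewrite /r ffunE; case: ifP => // /negbT uH.
  rewrite !inE (negbTE uH) andbF /= => hS.
  have uv : u != v by apply/negP => /eqP ev; move: uH; rewrite ev vH.
  rewrite ffunE (negbTE uv); exact: (proj1 hg).
move=> s' fs' hs' rep'.
have hs2 : forall u, u \in s' -> (u \in S) && (u \notin H).
  move=> u /hs'; rewrite !inE => /andP [h1 h2]; rewrite h2 /=.
  by move: h1; rewrite h2.
apply: (proj2 hg s' fs'); first by move=> u /hs2 /andP [].
apply: rep_ext rep' => u /hs2 /andP [uS uH].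
have uv : u != v by apply/negP => /eqP ev; move: uH; rewrite ev vH.
by rewrite /colf /r !ffunE (negbTE uH) (negbTE uv).
Qed.


Lemma pathok_card j : #|[set d | pathok j d]| <= (j + j) * max_deg adj.
Proof.
have sub : [set d | pathok j d] \subset
   \bigcup_(p <- iota 0 (j + j)) [set d | dartb d & (iter p fs d).1 == v].
  apply/subsetP => d; rewrite inE /pathok => /and4P [hd _ _ /mapP [p hp ev]].
  by apply: (@in_bigcup_seq _ _ _ _ p) => //; rewrite inE hd ev eqxx.
apply: leq_trans (subset_leq_card sub) _.
apply: leq_trans (card_bigcup_le _ _) _.
rewrite -{2}(size_iota 0 (j + j)); apply: sum_const_le => p; exact: count_pos.
Qed.

Lemma sum_ind_card (T : finType) (P : pred T) :
  \sum_(d <- enum [set: T]) (P d : nat) = #|P|.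
Proof.
rewrite big_enum /= -sum1_card [in RHS]big_mkcond /=.
apply: eq_big => [d|d _]; first by rewrite inE.
by rewrite unfold_in; case: (P d).
Qed.

Variable x : R.
Hypothesis hx0 : (0 < x)%R.
Hypothesis hx1 : (x < 1)%R.
Hypothesis chain : forall T : {set V}, T \subset S -> (INR (C (S :\: T)) <= x ^ #|T| * INR (C S))%R.

Lemma pow_mono a b : b <= a -> (x ^ a <= x ^ b)%R.
Proof.
move=> h; rewrite -(subnKC h) pow_add.
have h1 : (x ^ (a - b) <= 1)%R by rewrite -(pow1 (a - b)); apply: pow_incr; lra.
have h2 := pow_le x b (Rlt_le _ _ hx0). nra.
Qed.

Lemma XX_real j d : 0 < j ->
  (INR #|XX j d| <= (if pathok j d then x ^ j.-1 * INR (C S) else 0))%R.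
Proof.
move=> hj; case: (boolP (pathok j d)) => ok.
  have [T [sT hT hc]] := XX_card hj ok.
  apply: Rle_trans (le_INR _ _ (leP hc)) _.
  apply: Rle_trans (chain sT) _.
  apply: Rmult_le_compat_r; first exact: pos_INR.
  exact: pow_mono.
have -> : #|XX j d| = 0.
  apply/eqP; rewrite cards_eq0; apply/eqP/setP => p; rewrite !inE (negbTE ok) andbF //.
rewrite /=; lra.
Qed.

Lemma Nj_real j : 0 < j ->
  (INR (\sum_(d <- enum [set: V * V]) #|XX j d|) <=
   INR ((j + j) * max_deg adj) * (x ^ j.-1 * INR (C S)))%R.
Proof.
move=> hj; apply: Rle_trans (INR_sum_le _ (fun d => XX_real d hj)) _.
rewrite sumR_ind sum_ind_card.
apply: Rmult_le_compat_r.
  apply: Rmult_le_pos; [apply: pow_le; lra | exact: pos_INR].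
apply: le_INR; apply/leP; apply: leq_trans (pathok_card j); apply: subset_leq_card.
by apply/subsetP => d; rewrite inE unfold_in.
Qed.


Hypothesis Hk : (/x + INR (max_deg adj) + 2 * INR (max_deg adj) * ((2 * x - x ^ 2) / (1 - x) ^ 2)
   <= INR n.+1)%R.

Lemma step_nat : #|CS S| * n.+1 <= C (v |: S) + #|CS S| * max_deg adj +
  \sum_(j <- iota 2 #|V|) \sum_(d <- enum [set: V * V]) #|XX j d|.
Proof.
have e := cardsID EE PP.
rewrite /PP cardsX cardsT card_ord -/PP in e.
rewrite -e -addnA leq_add // ?good_pairs //.
apply: leq_trans (subset_leq_card cover) _.
apply: leq_trans (leq_card_setU _ _) _.
apply: leq_add; first exact: X1_card.
apply: leq_trans (card_bigcup_le _ _) _.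
apply: leq_sum => j _; exact: card_bigcup_le.
Qed.

Lemma step_real : (INR (C S) <= x * INR (C (v |: S)))%R.
Proof.
have hn := le_INR _ _ (leP step_nat).
have Hk' := Hk.
rewrite !plus_INR !mult_INR in hn.
set a := INR #|CS S| in hn *.
set D := INR (max_deg adj) in hn Hk' *.
set Q := ((2 * x - x ^ 2) / (1 - x) ^ 2)%R in Hk'.
have hsum : (INR (\sum_(j <- iota 2 #|V|) \sum_(d <- enum [set: V * V]) #|XX j d|)
     <= 2 * D * a * Q)%R.
  apply: Rle_trans (INR_sum_le_in (G := fun j => (INR ((j + j) * max_deg adj) * (x ^ j.-1 * INR (C S)))%R) _) _.
    move=> j; rewrite mem_iota => hj; apply: Nj_real; lia.
  apply: (Rle_trans _ (sumR (iota 2 #|V|) (fun j => ((2 * D * a) * (INR j * x ^ j.-1))%R))).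
    apply: sumR_le => j; apply: Req_le; rewrite mult_INR plus_INR /D /a /C; ring.
  rewrite sumR_scal; apply: Rmult_le_compat_l.
    have : (0 <= D)%R by apply: pos_INR.
    have : (0 <= a)%R by apply: pos_INR.
    nra.
  have := geom 1 #|V| (Rlt_le _ _ hx0) hx1.
  rewrite /Q /=; move=> h; apply: Rle_trans h _; apply: Req_le; field; lra.
have ha : (0 <= a)%R by apply: pos_INR.
have h1 := Rmult_le_compat_l _ _ _ ha Hk'.
have h2 : (a * / x <= INR (C (v |: S)))%R by rewrite /C in hn *; nra.
have e : a = (x * (a * / x))%R by field; lra.
rewrite {1}/C -/a e; apply: Rmult_le_compat_l; [exact: Rlt_le _ _ hx0 | exact: h2].
Qed.

End Step.

Variable x : R.
Hypothesis hx0 : (0 < x)%R.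
Hypothesis hx1 : (x < 1)%R.
Hypothesis Hk : (/x + INR (max_deg adj) + 2 * INR (max_deg adj) * ((2 * x - x ^ 2) / (1 - x) ^ 2)
   <= INR n.+1)%R.

Lemma chain_of (S : {set V}) :
  (forall S' : {set V}, S' \proper S -> forall w, w \notin S' ->
      (INR (C S') <= x * INR (C (w |: S')))%R) ->
  forall T : {set V}, T \subset S -> (INR (C (S :\: T)) <= x ^ #|T| * INR (C S))%R.
Proof.
move=> h.
suff H : forall m (T : {set V}), #|T| = m -> T \subset S ->
    (INR (C (S :\: T)) <= x ^ m * INR (C S))%R.
  by move=> T sT; apply: H.
elim=> [|m IH] T hT sT.
  move/eqP: hT; rewrite cards_eq0 => /eqP ->; rewrite setD0 /=; lra.
have : 0 < #|T| by rewrite hT.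
case/card_gt0P => a aT.
have aS : a \in S by move/subsetP: sT => /(_ a aT).
have hT' : #|T :\ a| = m by move: hT; rewrite (cardsD1 a T) aT add1n => -[].
have sT' : T :\ a \subset S by apply: subset_trans sT; apply: subsetDl.
have IH' := IH _ hT' sT'.
have eS : S :\: (T :\ a) = a |: (S :\: T).
  apply/setP => u; rewrite !inE; case: (eqVneq u a) => [->|] /=; by rewrite ?aS ?aT.
have pr : S :\: T \proper S.
  rewrite properEneq subsetDl andbT; apply/negP => /eqP e.
  by move: aS; rewrite -e inE aT.
have ha : a \notin S :\: T by rewrite inE aT.
have h1 := h _ pr a ha. rewrite -eS in h1.
have hx := Rlt_le _ _ hx0.
have h2 := Rmult_le_compat_l _ _ _ hx IH'.
rewrite /= ; lra.
Qed.

Lemma claim : forall (S : {set V}) w, w \notin S -> (INR (C S) <= x * INR (C (w |: S)))%R.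
Proof.
move=> S; elim: {S}_.+1 {-2}S (ltnSn #|S|) => // m IH S hS w hw.
apply: (@step_real S w hw x hx0 hx1) => //.
apply: chain_of => S' pr w' hw'.
apply: IH => //. by apply: leq_trans (proper_card pr) _.
Qed.

Lemma exists_good : exists f, good setT f.
Proof.
have := chain_of (fun S' _ w hw => claim hw) (subxx [set: V]).
rewrite setDv C0 => h.
have : 0 < C setT.
  rewrite lt0n; apply/negP => /eqP e; move: h; rewrite e /=.
  have := pow_lt x #|[set: V]| hx0; lra.
rewrite /C => /card_gt0P [f]; rewrite inE => /pbP hf. by exists f.
Qed.

End Main.

Theorem theorem7 (V : finType) (adj : rel V) (rot : V -> V -> V) :
  simple_graph adj ->
  planar_rotation adj rot ->
  2 <= max_deg adj ->
  forall k : nat,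
    (INR (max_deg adj) + 4 * sqrt (INR (max_deg adj)) + 3 <= INR k)%R ->
    facial_thue_choosable adj rot k.
Proof.
move=> [Hsym Hirr] [Hrot _] hD k hk L HL.
set D := max_deg adj in hD hk *.
have hD2 : (2 <= INR D)%R by have := le_INR _ _ (leP hD).
set t := sqrt (INR D) in hk.
have ht : (0 < t)%R by apply: sqrt_lt_R0; lra.
have tt : (t * t = INR D)%R by apply: sqrt_sqrt; lra.
case: k hk HL => [|n] hk HL; first by move: hk => /=; lra.
pose x := (/ (2 * t + 1))%R.
have hx0 : (0 < x)%R by apply: Rinv_0_lt_compat; lra.
have hx1 : (x < 1)%R.
  rewrite /x -Rinv_1; apply: Rinv_lt_contravar; lra.
have ex : (/ x = 2 * t + 1)%R by rewrite /x Rinv_inv.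
have eQ : (2 * INR D * ((2 * x - x ^ 2) / (1 - x) ^ 2) = 2 * t + / 2)%R.
  rewrite -tt /x; field; lra.
have Hk : (/x + INR D + 2 * INR D * ((2 * x - x ^ 2) / (1 - x) ^ 2) <= INR n.+1)%R.
  rewrite eQ ex; lra.
have [f hf] := exists_good Hsym Hirr Hrot HL hx0 hx1 Hk.
exists (colf L f); split; first by move=> v; apply: col_in.
move=> s fs; apply: (proj2 hf s fs) => u _; by rewrite inE.
Qed.
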